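(* Let $(\mathbf M,\tau)$ be a state BL-algebra. Then: (1) If $\tau$ is faithful (i.e. $\mathrm{Ker}(\tau)=\{1\}$), then $(\mathbf M,\tau)$ is a subdirectly irreducible state BL-algebra if and only if $\tau(\mathbf M)$ is a subdirectly irreducible BL-algebra. Suppose now that $(\mathbf M,\tau)$ is subdirectly irreducible. Then: (2) $\mathrm{Ker}(\tau)$ is either the trivial hoop $\{1\}$ or a subdirectly irreducible hoop; (3) $\mathrm{Ker}(\tau)$ and $\tau(M)$ have the disjunction property, i.e. for all $x\in \mathrm{Ker}(\tau)$ and $y\in\tau(M)$, if $x\vee y=1$ then $x=1$ or $y=1$.
   Context: A BL-algebra is an algebra $\mathbf M=(M;\wedge,\vee,\odot,\to,0,1)$ of type $\langle 2,2,2,2,0,0\rangle$ such that $(M;\wedge,\vee,0,1)$ is a bounded lattice, $(M;\odot,1)$ is a commutative monoid, and for all $a,b,c$: $c\le a\to b$ iff $a\odot c\le b$; $a\wedge b=a\odot(a\to b)$; $(a\to b)\vee(b\to a)=1$. A filter of $\mathbf M$ is a nonempty $F\subseteq M$ closed under $\odot$ and upward closed. A state-operator on $\mathbf M$ is a map $\tau:M\to M$ such that for all $x,y$: $\tau(0)=0$; $\tau(x\to y)=\tau(x)\to\tau(x\wedge y)$; $\tau(x\odot y)=\tau(x)\odot\tau(x\to(x\odot y))$; $\tau(\tau(x)\odot\tau(y))=\tau(x)\odot\tau(y)$; $\tau(\tau(x)\to\tau(y))=\tau(x)\to\tau(y)$. The pair $(\mathbf M,\tau)$ is a state BL-algebra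 (an algebra with the extra unary operation $\tau$). A $\tau$-filter is a filter $F$ with $\tau(F)\subseteq F$; congruences of $(\mathbf M,\tau)$ correspond bijectively to $\tau$-filters (via $x\sim_F y$ iff $x\to y,y\to x\in F$), so $(\mathbf M,\tau)$ is subdirectly irreducible iff it has a least $\tau$-filter different from $\{1\}$. $\mathrm{Ker}(\tau)=\{a\in M:\tau(a)=1\}$; $\tau$ is faithful if $\mathrm{Ker}(\tau)=\{1\}$. The image $\tau(M)$ is a subalgebra of $\mathbf M$ (a BL-algebra, denoted $\tau(\mathbf M)$), and $\mathrm{Ker}(\tau)$ is closed under $\odot,\to$ and contains $1$, hence is a hoop; a filter of this hoop is a nonempty subset closed under $\odot$ and upward closed in $\mathrm{Ker}(\tau)$, and the hoop is subdirectly irreducible if it has a least filter different from $\{1\}$. *)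

(* Defs.v *)
Record BLalgebra := {
  carrier :> Type;
  meet : carrier -> carrier -> carrier;
  join : carrier -> carrier -> carrier;
  odot : carrier -> carrier -> carrier;
  imp  : carrier -> carrier -> carrier;
  zero : carrier;
  one  : carrier;
  meetA : forall a b c, meet a (meet b c) = meet (meet a b) c;
  joinA : forall a b c, join a (join b c) = join (join a b) c;
  meetC : forall a b, meet a b = meet b a;
  joinC : forall a b, join a b = join b a;
  meet_absorb : forall a b, meet a (join a b) = a;
  join_absorb : forall a b, join a (meet a b) = a;
  join0 : forall a, join zero a = a;
  meet1 : forall a, meet one a = a;
  odotA : forall a b c, odot a (odot b c) = odot (odot a b) c;
  odotC : forall a b, odot a b = odot b a;
  odot1 : forall a, odot a one = a;
  (* residuation: c <= a -> b  iff  a odot c <= b *)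
  residuation : forall a b c,
      meet c (imp a b) = c <-> meet (odot a c) b = odot a c;
  divisibility : forall a b, meet a b = odot a (imp a b);
  prelinearity : forall a b, join (imp a b) (imp b a) = one
}.

Arguments meet {_}. Arguments join {_}. Arguments odot {_}.
Arguments imp {_}. Arguments zero {_}. Arguments one {_}.

Definition le {M : BLalgebra} (a b : M) : Prop := meet a b = a.

Definition is_state_operator {M : BLalgebra} (tau : M -> M) : Prop :=
  tau zero = zero /\
  (forall x y, tau (imp x y) = imp (tau x) (tau (meet x y))) /\
  (forall x y, tau (odot x y) = odot (tau x) (tau (imp x (odot x y)))) /\
  (forall x y, tau (odot (tau x) (tau y)) = odot (tau x) (tau y)) /\
  (forall x y, tau (imp (tau x) (tau y)) = imp (tau x) (tau y)).

Definition Ker {M : BLalgebra} (tau : M -> M) (x : M) : Prop := tau x = one.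
Definition Img {M : BLalgebra} (tau : M -> M) (y : M) : Prop :=
  exists z, y = tau z.

Definition faithful {M : BLalgebra} (tau : M -> M) : Prop :=
  forall x, Ker tau x -> x = one.

(** With S = everything this is a filter of M; with S = Img tau a filter
    of the BL-algebra tau(M); with S = Ker tau a filter of the hoop Ker(tau). *)
Definition is_filter_in {M : BLalgebra} (S F : M -> Prop) : Prop :=
  (forall x, F x -> S x) /\
  (exists x, F x) /\
  (forall x y, F x -> F y -> F (odot x y)) /\
  (forall x y, F x -> S y -> le x y -> F y).

Definition is_filter {M : BLalgebra} (F : M -> Prop) : Prop :=
  is_filter_in (fun _ => True) F.

Definition is_tau_filter {M : BLalgebra} (tau : M -> M) (F : M -> Prop) : Prop :=
  is_filter F /\ (forall x, F x -> F (tau x)).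

(** A filter different from {1} (filters always contain 1). *)
Definition nontrivial {M : BLalgebra} (F : M -> Prop) : Prop :=
  exists x, F x /\ x <> one.

Definition SI_in {M : BLalgebra} (S : M -> Prop) : Prop :=
  exists F, is_filter_in S F /\ nontrivial F /\
    forall G, is_filter_in S G -> nontrivial G -> forall x, F x -> G x.

Definition SI_state {M : BLalgebra} (tau : M -> M) : Prop :=
  exists F, is_tau_filter tau F /\ nontrivial F /\
    forall G, is_tau_filter tau G -> nontrivial G -> forall x, F x -> G x.

(* Main.v *)
Require Import Defs.
From Stdlib Require Import Classical.

Lemma le_refl (M : BLalgebra) (a : M) : le a a.
Proof. unfold le. pose proof (meet_absorb M a (meet a a)) as H.
  rewrite (join_absorb M a a) in H. exact H. Qed.

Lemma le_antisym (M : BLalgebra) (a b : M) : le a b -> le b a -> a = b.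
Proof. unfold le; intros H1 H2. rewrite <- H1, meetC. exact H2. Qed.

Lemma le_trans (M : BLalgebra) (a b c : M) : le a b -> le b c -> le a c.
Proof. unfold le; intros H1 H2. rewrite <- H1 at 1. rewrite <- meetA, H2. exact H1. Qed.

Lemma le_top (M : BLalgebra) (a : M) : le a one.
Proof. unfold le. rewrite meetC. apply meet1. Qed.

Lemma le_join_l (M : BLalgebra) (a b : M) : le a (join a b).
Proof. apply meet_absorb. Qed.

Lemma le_join_r (M : BLalgebra) (a b : M) : le b (join a b).
Proof. unfold le. rewrite joinC. apply meet_absorb. Qed.

Lemma join_eq (M : BLalgebra) (a c : M) : le a c -> join a c = c.
Proof. unfold le; intro H. rewrite <- H. rewrite joinC, meetC. apply join_absorb. Qed.

Lemma le_of_join (M : BLalgebra) (a c : M) : join a c = c -> le a c.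
Proof. unfold le; intro H. rewrite <- H. apply meet_absorb. Qed.

Lemma join_lub (M : BLalgebra) (a b c : M) : le a c -> le b c -> le (join a b) c.
Proof. intros Ha Hb. apply le_of_join. rewrite <- joinA, (join_eq _ _ _ Hb), (join_eq _ _ _ Ha).
  reflexivity. Qed.

Lemma res1 (M : BLalgebra) (a b c : M) : le (odot a c) b -> le c (imp a b).
Proof. apply (proj2 (residuation M a b c)). Qed.

Lemma res2 (M : BLalgebra) (a b c : M) : le c (imp a b) -> le (odot a c) b.
Proof. apply (proj1 (residuation M a b c)). Qed.

Lemma imp_one (M : BLalgebra) (a b : M) : le a b -> imp a b = one.
Proof. intro H. apply le_antisym. apply le_top. apply res1. rewrite odot1. exact H. Qed.

Lemma imp_self (M : BLalgebra) (a : M) : imp a a = one.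
Proof. apply imp_one, le_refl. Qed.

Lemma odot_mono (M : BLalgebra) (a b c : M) : le a b -> le (odot a c) (odot b c).
Proof. intro H.
  assert (H1 : le b (imp c (odot b c))) by (apply res1; rewrite odotC; apply le_refl).
  pose proof (res2 _ _ _ _ (le_trans _ _ _ _ H H1)) as H2. rewrite odotC. exact H2. Qed.

Lemma odot_mono2 (M : BLalgebra) (a b c d : M) : le a b -> le c d -> le (odot a c) (odot b d).
Proof. intros H1 H2. apply le_trans with (odot b c). apply odot_mono; auto.
  rewrite (odotC _ b c), (odotC _ b d). apply odot_mono; auto. Qed.

Lemma odot_le_l (M : BLalgebra) (a c : M) : le (odot a c) a.
Proof. pose proof (odot_mono M c one a (le_top _ _)) as H.
  rewrite (odotC _ c a), (odotC _ one a), odot1 in H. exact H. Qed.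

Fixpoint pw {M : BLalgebra} (a : M) (n : nat) : M :=
  match n with 0 => one | S n => odot a (pw a n) end.

Lemma pw_add (M : BLalgebra) (a : M) n m : pw a (n + m) = odot (pw a n) (pw a m).
Proof. induction n; simpl. rewrite odotC, odot1; reflexivity. rewrite IHn, odotA; reflexivity. Qed.

Lemma join_odot (M : BLalgebra) (x y z : M) :
  join x y = one -> join x z = one -> join x (odot y z) = one.
Proof. intros Hxy Hxz. set (j := join x (odot y z)).
  apply le_antisym; [apply le_top|].
  assert (A : le y (imp z j)). { apply res1. rewrite odotC. apply le_join_r. }
  assert (B : le x (imp z j)). { apply res1. apply le_trans with x; [|apply le_join_l].
    rewrite odotC. apply odot_le_l. }
  pose proof (join_lub _ _ _ _ B A) as C. rewrite Hxy in C.
  pose proof (res2 _ _ _ _ C) as D. rewrite odot1 in D.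
  pose proof (join_lub _ _ _ _ (le_join_l _ x (odot y z)) D) as E. rewrite Hxz in E. exact E. Qed.

Lemma pw_join (M : BLalgebra) (x y : M) m : join x y = one -> join x (pw y m) = one.
Proof. intro H. induction m; simpl. apply join_eq, le_top. apply join_odot; auto. Qed.

Section St.
Context (M : BLalgebra) (tau : M -> M) (Htau : is_state_operator tau).

Lemma tau_one : tau one = one.
Proof. destruct Htau as [T0 [T1 [T2 [T3 T4]]]]. pose proof (T1 one one) as H.
  rewrite imp_self, meet1, imp_self in H. exact H. Qed.

Lemma tau_mono x y : le x y -> le (tau x) (tau y).
Proof. destruct Htau as [T0 [T1 [T2 [T3 T4]]]]. intro H.
  pose proof (divisibility M y x) as D. rewrite meetC in D. unfold le in H. rewrite H in D.
  rewrite D, T2. apply odot_le_l. Qed.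

Lemma tau_idem x : tau (tau x) = tau x.
Proof. destruct Htau as [T0 [T1 [T2 [T3 T4]]]]. pose proof (T3 x one) as H.
  rewrite tau_one, odot1 in H. exact H. Qed.

Lemma Ker_odot x y : tau x = one -> tau y = one -> tau (odot x y) = one.
Proof. destruct Htau as [T0 [T1 [T2 [T3 T4]]]]. intros Hx Hy. rewrite T2, Hx.
  assert (E : tau (imp x (odot x y)) = one).
  { apply le_antisym; [apply le_top|]. rewrite <- Hy. apply tau_mono. apply res1, le_refl. }
  rewrite E. apply odot1. Qed.

Lemma Ker_up x y : tau x = one -> le x y -> tau y = one.
Proof. intros Hx L. apply le_antisym; [apply le_top|]. rewrite <- Hx. apply tau_mono, L. Qed.

Lemma Img_odot a b : Img tau a -> Img tau b -> Img tau (odot a b).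
Proof. destruct Htau as [T0 [T1 [T2 [T3 T4]]]]. intros [z1 E1] [z2 E2]. subst.
  exists (odot (tau z1) (tau z2)). rewrite T3. reflexivity. Qed.

Lemma Img_fix a : Img tau a -> tau a = a.
Proof. intros [z E]. subst. apply tau_idem. Qed.

Lemma Img_one : Img tau one.
Proof. exists one. rewrite tau_one. reflexivity. Qed.

Lemma pw_Ker x n : tau x = one -> tau (pw x n) = one.
Proof. intro H. induction n; simpl. apply tau_one. apply Ker_odot; auto. Qed.

Lemma pw_Img y n : Img tau y -> Img tau (pw y n).
Proof. intro H. induction n; simpl. apply Img_one. apply Img_odot; auto. Qed.

Definition up (G : M -> Prop) : M -> Prop := fun x => exists h, G h /\ le h x.

Lemma up_tau (G : M -> Prop) : is_filter_in (Img tau) G -> is_tau_filter tau (up G).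
Proof. intros [GS [[g Gg] [God Gup]]]. split.
  - split; [intros; exact I|]. split; [exists g; exists g; split; [exact Gg| apply le_refl]|].
    split.
    + intros x y [h1 [G1 L1]] [h2 [G2 L2]]. exists (odot h1 h2). split; [apply God; auto|].
      apply odot_mono2; auto.
    + intros x y [h [Gh L]] _ Lxy. exists h. split; [exact Gh| eapply le_trans; eauto].
  - intros x [h [Gh L]]. exists h. split; [exact Gh|].
    rewrite <- (Img_fix h (GS h Gh)). apply tau_mono, L. Qed.

Lemma up_nt (G : M -> Prop) : nontrivial G -> nontrivial (up G).
Proof. intros [g [Gg Hg]]. exists g. split; [exists g; split; [exact Gg| apply le_refl] | exact Hg]. Qed.

Lemma cap_filter (G : M -> Prop) : is_tau_filter tau G ->
  is_filter_in (Img tau) (fun x => G x /\ Img tau x).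
Proof. intros [[_ [[g0 Gg0] [God Gup]]] Gt]. split; [intros x [_ H]; exact H|].
  split; [exists one; split; [apply (Gup g0 one Gg0 I (le_top _ _)) | apply Img_one]|].
  split.
  - intros x y [Gx Ix] [Gy Iy]. split; [apply God; auto| apply Img_odot; auto].
  - intros x y [Gx _] Iy L. split; [apply (Gup x y Gx I L)| exact Iy]. Qed.

Lemma cap_nt (G : M -> Prop) : faithful tau -> is_tau_filter tau G -> nontrivial G ->
  nontrivial (fun x => G x /\ Img tau x).
Proof. intros Hf [_ Gt] [w [Gw Hw]]. exists (tau w). split; [split; [apply Gt, Gw| exists w; reflexivity]|].
  intro E. apply Hw, Hf, E. Qed.

Definition gen (a : M) : M -> Prop := fun z => exists n, le (pw a n) z.

Lemma gen_filter a : is_filter (gen a).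
Proof. split; [intros; exact I|]. split; [exists one; exists 0; apply le_refl|]. split.
  - intros x y [n Ln] [m Lm]. exists (n + m). rewrite pw_add. apply odot_mono2; auto.
  - intros x y [n Ln] _ L. exists n. eapply le_trans; eauto. Qed.

Lemma gen_nt a : a <> one -> nontrivial (gen a).
Proof. intro H. exists a. split; [exists 1; simpl; rewrite odot1; apply le_refl| exact H]. Qed.

End St.

Theorem lemma2p1 (M : BLalgebra) (tau : M -> M) (Htau : is_state_operator tau) :
  (faithful tau -> (SI_state tau <-> SI_in (Img tau))) /\
  (SI_state tau ->
     ((forall x, Ker tau x -> x = one) \/ SI_in (Ker tau)) /\
     (forall x y, Ker tau x -> Img tau y -> join x y = one -> x = one \/ y = one)).
Proof.
  split.
  - intro Hf. split.
    + intros [F [FT [Fnt Fmin]]].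
      exists (fun x => F x /\ Img tau x). split; [apply cap_filter; auto|].
      split; [apply cap_nt; auto|].
      intros G HG Gnt x [Fx Ix].
      destruct (Fmin (up M G) (up_tau M tau Htau G HG) (up_nt M G Gnt) x Fx) as [h [Gh L]].
      destruct HG as [_ [_ [_ Gup]]]. exact (Gup h x Gh Ix L).
    + intros [H [HH [Hnt Hmin]]]. exists (up M H).
      split; [apply up_tau; auto|]. split; [apply up_nt; auto|].
      intros G GT Gnt x [h [Hh L]].
      destruct (Hmin _ (cap_filter M tau Htau G GT) (cap_nt M tau G Hf GT Gnt) h Hh) as [Gh _].
      destruct GT as [[_ [_ [_ Gup]]] _]. exact (Gup h x Gh I L).
  - intros [F [[[_ [Fne [Fod Fup]]] Ftau] [[w [Fw Hw]] Fmin]]]. split.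
    + destruct (classic (exists a, Ker tau a /\ a <> one)) as [[a [Ka Ha]] | Hn].
      * right.
        assert (KT : is_tau_filter tau (Ker tau)).
        { split; [split; [intros; exact I| split; [exists one; apply tau_one; auto| split]]|].
          - intros x y Hx Hy. apply Ker_odot; auto.
          - intros x y Hx _ L. eapply Ker_up; eauto.
          - intros x Hx. unfold Ker in *. rewrite tau_idem; auto. }
        assert (FK : forall x, F x -> Ker tau x).
        { apply Fmin; [exact KT| exists a; auto]. }
        exists F. split; [split; [exact FK| split; [exact Fne| split; [exact Fod|]]]|].
        { intros x y Fx _ L. exact (Fup x y Fx I L). }
        split; [exists w; auto|].
        intros G [GK [Gne [God Gup]]] Gnt x Fx. apply (Fmin G); [| exact Gnt | exact Fx].
        split; [split; [intros; exact I| split; [exact Gne| split; [exact God|]]]|].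
        { intros x0 y Gx _ L. apply (Gup x0 y Gx); [exact (Ker_up M tau Htau x0 y (GK x0 Gx) L) | exact L]. }
        { intros x0 Gx. unfold Ker in GK. rewrite (GK x0 Gx).
          destruct Gne as [g0 Gg0]. apply (Gup g0 one Gg0); [apply tau_one; auto| apply le_top]. }
      * left. intros x Kx. destruct (classic (x = one)) as [E|E]; auto.
        exfalso; apply Hn; eauto.
    + intros x y Kx Iy J.
      destruct (classic (x = one)) as [|Hx]; [left; auto|].
      destruct (classic (y = one)) as [|Hy]; [right; auto|]. exfalso.
      assert (Fgx : forall z, F z -> gen M x z).
      { apply Fmin; [| apply gen_nt; auto]. split; [apply gen_filter|].
        intros z [n L]. exists n. unfold Ker in Kx.
        rewrite (Ker_up M tau Htau (pw x n) z (pw_Ker M tau Htau x n Kx) L). apply le_top. }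
      assert (Fgy : forall z, F z -> gen M y z).
      { apply Fmin; [| apply gen_nt; auto]. split; [apply gen_filter|].
        intros z [n L]. exists n.
        rewrite <- (Img_fix M tau Htau _ (pw_Img M tau Htau y n Iy)). apply tau_mono; auto. }
      destruct (Fgx w Fw) as [n Ln]. destruct (Fgy w Fw) as [m Lm].
      assert (J2 : join (pw x n) (pw y m) = one).
      { pose proof (pw_join M x y m J) as J1. rewrite joinC in J1.
        pose proof (pw_join M _ _ n J1) as J3. rewrite joinC in J3. exact J3. }
      pose proof (join_lub M _ _ _ Ln Lm) as L. rewrite J2 in L.
      apply Hw. apply le_antisym; [apply le_top| exact L].
Qed.
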